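(* For $\alpha>1$, the function $r_\alpha(p)=\frac{1}{\alpha-1}\log\left(p^\alpha(1-p)^{1-\alpha}+(1-p)^\alpha p^{1-\alpha}\right)$ for $0\le p\le1$ is convex.
   Context: $\alpha>1$ is a real number; $r_\alpha$ may take the value $+\infty$ at $p\in\{0,1\}$. *)

(* Defs.v *)
From HB Require Import structures.
From mathcomp Require Import all_boot all_order all_algebra.
From mathcomp Require Import all_classical all_reals all_analysis.
Set Implicit Arguments. Unset Strict Implicit. Unset Printing Implicit Defensive.
Import Order.TTheory GRing.Theory Num.Theory.
Local Open Scope ring_scope.

(* r_alpha(p) = 1/(alpha-1) * ln (p^alpha (1-p)^(1-alpha) + (1-p)^alpha p^(1-alpha))
   for 0 < p < 1, and +oo at p = 0 and p = 1 (the limit value when alpha > 1).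
   Values outside [0,1] are irrelevant (set to +oo, never used). *)
Definition r_alpha (R : realType) (alpha p : R) : \bar R :=
  if (0 < p) && (p < 1) then
    ((alpha - 1)^-1 * ln (p `^ alpha * (1 - p) `^ (1 - alpha)
                          + (1 - p) `^ alpha * p `^ (1 - alpha)))%:E
  else +oo%E.

(* Main.v *)
Require Import Defs.
From HB Require Import structures.
From mathcomp Require Import all_boot all_order all_algebra.
From mathcomp Require Import all_classical all_reals all_analysis.
From mathcomp Require Import ring lra.
Import Order.TTheory GRing.Theory Num.Theory.
Import numFieldNormedType.Exports.
Local Open Scope ring_scope.

Section SA.
Context {R : realType}.

Lemma expR_conv0 (th z : R) : 0 <= th -> th <= 1 ->
  expR (th * z) <= th * expR z + (1 - th).
Proof.
move=> h0 h1.
have := @convex_expR R (Itv01 h0 h1) z 0.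
by rewrite !convRE /= expR0 mulr0 addr0 mulr1.
Qed.

Lemma keyF (g w : R) : 1 < g ->
  (g + 1) * (expR ((g - 1) * w) + expR (- ((g - 1) * w)))
  <= 4 + (g - 1) * (expR ((g + 1) * w) + expR (- ((g + 1) * w))).
Proof.
move=> g1.
have gp : 0 < g + 1 by lra.
set th := (g - 1) / (g + 1).
have th0 : 0 <= th by rewrite /th divr_ge0 //; lra.
have th1 : th <= 1 by rewrite /th ler_pdivrMr //; lra.
have e1 := @expR_conv0 th ((g + 1) * w) th0 th1.
have e2 := @expR_conv0 th (- ((g + 1) * w)) th0 th1.
have E : th * ((g + 1) * w) = (g - 1) * w.
  by rewrite /th mulrA divfK // gt_eqF.
rewrite mulrN E in e2; rewrite E in e1.
have H : (g + 1) * th = g - 1 by rewrite /th mulrC divfK // gt_eqF.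
set A := expR ((g + 1) * w) in e1 *; set B := expR (- ((g + 1) * w)) in e2 *.
have h : (g + 1) * (expR ((g - 1) * w) + expR (- ((g - 1) * w)))
   <= (g + 1) * (th * (A + B) + 2 * (1 - th)).
  by apply: ler_wpM2l; [lra|lra].
apply: (le_trans h); rewrite mulrDr mulrA H.
have H2 : (g + 1) * (2 * (1 - th)) = 4.
  by rewrite mulrCA mulrBr mulr1 H; ring.
rewrite H2; lra.
Qed.

End SA.



Lemma final_alg {R : realType} (c p q X : R) : 1 < c -> 0 < p -> 0 < q -> p + q = 1 -> 0 < X ->
  (c + 1) * (X * q / p + p / (q * X)) <= 4 + (c - 1) * (X * p / q + q / (p * X)) ->
  0 <= 2 * c ^+ 2 * X + c * (X ^+ 2 - 1) * (p - q) - (p ^+ 2 + q ^+ 2) * (X + 1) ^+ 2.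
Proof.
move=> c1 p0 q0 pq X0 H.
have pqX : 0 < p * q * X by rewrite !mulr_gt0.
have := ler_wpM2l (ltW pqX) H.
have e1 : p * q * X * ((c + 1) * (X * q / p + p / (q * X))) = (c + 1) * (X ^+ 2 * q ^+ 2 + p ^+ 2).
  by field; rewrite !gt_eqF.
have e2 : p * q * X * (4 + (c - 1) * (X * p / q + q / (p * X))) = 4 * p * q * X + (c - 1) * (p ^+ 2 * X ^+ 2 + q ^+ 2).
  by field; rewrite !gt_eqF.
rewrite e1 e2 => H'.
have -> : 2 * c ^+ 2 * X + c * (X ^+ 2 - 1) * (p - q) - (p ^+ 2 + q ^+ 2) * (X + 1) ^+ 2
  = (4 * p * q * X + (c - 1) * (p ^+ 2 * X ^+ 2 + q ^+ 2) - (c + 1) * (X ^+ 2 * q ^+ 2 + p ^+ 2))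
    + 2 * (c ^+ 2 - 1) * X.
  have -> : q = 1 - p by lra.
  ring.
apply: addr_ge0; first by lra.
apply: mulr_ge0; last exact: ltW.
apply: mulr_ge0 => //. rewrite subr_ge0; nra.
Qed.

Section S.
Context {R : realType}.
Variable k : R.

Definition w (p : R) := ln p - ln (1 - p).
Definition ep (p : R) := expR (k * w p).
Definition em (p : R) := expR (- (k * w p)).
Definition g (p : R) := 2^-1 * ln p + 2^-1 * ln (1 - p) + ln (ep p + em p).
Definition wd (p : R) := p^-1 + (1 - p)^-1.
Definition Q (p : R) := (ep p - em p) / (ep p + em p).
Definition dg (p : R) :=
  2^-1 * p^-1 - 2^-1 * (1 - p)^-1 + k * Q p * wd p.

Lemma der_1m (p : R) : is_derive p 1 (fun x : R => 1 - x) (-1).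
Proof.
have h := @is_deriveB R R^o R^o (cst 1) id p 1 0 1 _ _.
rewrite sub0r in h; exact: h.
Qed.

Lemma der_ln1m (p : R) : p < 1 -> is_derive p 1 (fun x => ln (1 - x)) (- (1 - p)^-1).
Proof.
move=> p1.
have h1 : is_derive (1 - p) 1 (@ln R) (1 - p)^-1 by apply: is_derive1_ln; lra.
have := @is_derive1_comp R (@ln R) (fun x => 1 - x) p _ _ h1 (der_1m p).
by rewrite mulrN1.
Qed.

Lemma der_w (p : R) : 0 < p < 1 -> is_derive p 1 w (wd p).
Proof.
case/andP=> p0 p1.
have h := @is_deriveB R R^o R^o (@ln R) (fun x => ln (1 - x)) p 1 _ _ (is_derive1_ln p0) (@der_ln1m p p1).
rewrite /wd; apply: is_derive_eq h _; rewrite opprK //.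
Qed.

Lemma der_ep (p : R) : 0 < p < 1 -> is_derive p 1 ep (ep p * (k * wd p)).
Proof.
move=> hp.
have h1 := @is_deriveZ R R^o R^o w k p 1 _ (@der_w p hp).
have := @is_derive1_comp R (@expR R) (k \*: w) p _ _ (is_derive_expR _) h1.
by [].
Qed.

Lemma der_em (p : R) : 0 < p < 1 -> is_derive p 1 em (em p * (- (k * wd p))).
Proof.
move=> hp.
have h1 := @is_deriveZ R R^o R^o w k p 1 _ (@der_w p hp).
have h2 := @is_deriveN R R^o R^o (k \*: w) p 1 _ h1.
have := @is_derive1_comp R (@expR R) (- (k \*: w)) p _ _ (is_derive_expR _) h2.
by [].
Qed.


Lemma C_gt0 (p : R) : 0 < ep p + em p.
Proof. by rewrite addr_gt0 // expR_gt0. Qed.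

Lemma der_g (p : R) : 0 < p < 1 -> is_derive p 1 g (dg p).
Proof.
move=> hp; have /andP[p0 p1] := hp.
have h1 := @is_deriveZ R R^o R^o (@ln R) (2^-1) p 1 _ (is_derive1_ln p0).
have h2 := @is_deriveZ R R^o R^o (fun x => ln (1 - x)) (2^-1) p 1 _ (@der_ln1m p p1).
have h3 := @is_deriveD R R^o R^o (ep : R -> R^o) em p 1 _ _ (@der_ep p hp) (@der_em p hp).
have h4 := @is_derive1_comp R (@ln R) (ep + em) p _ _ (is_derive1_ln (C_gt0 p)) h3.
have h5 := @is_deriveD R R^o R^o _ _ p 1 _ _ h1 h2.
have h6 := @is_deriveD R R^o R^o _ _ p 1 _ _ h5 h4.
apply: is_derive_eq h6 _.
rewrite /dg /Q /=.
have := C_gt0 p; rewrite /GRing.scale /= => hC.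
field; rewrite !gt_eqF //; lra.
Qed.

Definition wdd (p : R) := - (p ^+ 2)^-1 + ((1 - p) ^+ 2)^-1.
Definition Qd (p : R) := 4 * k * wd p * (ep p * em p) / (ep p + em p) ^+ 2.
Definition ddg (p : R) :=
  - 2^-1 * (p ^+ 2)^-1 - 2^-1 * ((1 - p) ^+ 2)^-1 + k * (Qd p * wd p + Q p * wdd p).

Lemma der_inv (p : R) : 0 < p -> is_derive p 1 (fun x : R => x^-1) (- (p ^+ 2)^-1).
Proof.
move=> p0.
have h := @is_deriveV R id p 1 1 (lt0r_neq0 p0) (@is_derive_id R R^o p 1).
apply: is_derive_eq h _; rewrite /GRing.scale /= mulr1 //.
Qed.

Lemma der_inv1m (p : R) : p < 1 -> is_derive p 1 (fun x : R => (1 - x)^-1) (((1 - p) ^+ 2)^-1).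
Proof.
move=> p1.
have h := @is_deriveV R (fun x => 1 - x) p (-1) 1 _ (der_1m p).
apply: is_derive_eq (h _) _; first by rewrite subr_eq0 gt_eqF // ?lt_def.
by rewrite /GRing.scale /= mulrN1 opprK.
Qed.

Lemma der_wd (p : R) : 0 < p < 1 -> is_derive p 1 wd (wdd p).
Proof.
case/andP=> p0 p1.
have h := @is_deriveD R R^o R^o _ _ p 1 _ _ (@der_inv p p0) (@der_inv1m p p1).
exact: h.
Qed.

Lemma der_dg (p : R) : 0 < p < 1 -> is_derive p 1 (dg : R -> R^o) (ddg p).
Proof.
move=> hp; have /andP[p0 p1] := hp.
have h1 := @is_deriveZ R R^o R^o (fun x : R => x^-1) (2^-1) p 1 _ (@der_inv p p0).
have h2 := @is_deriveZ R R^o R^o (fun x : R => (1 - x)^-1) (2^-1) p 1 _ (@der_inv1m p p1).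
have h12 := @is_deriveB R R^o R^o _ _ p 1 _ _ h1 h2.
have hD := @is_deriveB R R^o R^o (ep : R -> R^o) em p 1 _ _ (@der_ep p hp) (@der_em p hp).
have hC := @is_deriveD R R^o R^o (ep : R -> R^o) em p 1 _ _ (@der_ep p hp) (@der_em p hp).
have hCi := @is_deriveV R (ep + em) p _ 1 (lt0r_neq0 (C_gt0 p)) hC.
have hQ := @is_deriveM R R^o _ _ p 1 _ _ hD hCi.
have hkQ := @is_deriveZ R R^o R^o _ k p 1 _ hQ.
have hkQw := @is_deriveM R R^o _ _ p 1 _ _ hkQ (@der_wd p hp).
have h := @is_deriveD R R^o R^o _ _ p 1 _ _ h12 hkQw.
apply: is_derive_eq h _.
rewrite /ddg /Qd /Q /=.
have := C_gt0 p; rewrite /GRing.scale /= => hC0.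
have e3 : ((ep - em) * (fun y : R => ((ep + em) y)^-1)) p = (ep p - em p) * (ep p + em p)^-1 by [].
have e1 : (ep - em) p = ep p - em p by [].
have e2 : (ep + em) p = ep p + em p by [].
rewrite e3 e1 e2.
field; rewrite !gt_eqF //; lra.
Qed.

Lemma expw (p : R) : 0 < p < 1 -> expR (w p) = p / (1 - p).
Proof.
case/andP=> p0 p1.
rewrite /w expRD expRN !lnK // posrE; lra.
Qed.

Lemma ddg_ge0 (p : R) : 2^-1 < k -> 0 < p < 1 -> 0 <= ddg p.
Proof.
move=> k2 hp; have /andP[p0 p1] := hp.
set c := 2 * k.
have c1 : 1 < c by rewrite /c; lra.
set q := 1 - p.
have q0 : 0 < q by rewrite /q; lra.
set E := ep p.
have E0 : 0 < E by rewrite /E /ep expR_gt0.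
have emE : em p = E^-1 by rewrite /em expRN.
set X := E ^+ 2.
have X0 : 0 < X by rewrite /X exprn_gt0.
have ew := @expw p hp.
have eX : expR (c * w p) = X.
  have -> : c * w p = k * w p + k * w p by rewrite /c; ring.
  by rewrite expRD /X /E /ep expr2.
have k1 : expR ((c - 1) * w p) = X * q / p.
  by rewrite mulrBl mul1r expRD expRN ew eX /q invf_div mulrA.
have k2' : expR (- ((c - 1) * w p)) = p / (q * X).
  by rewrite expRN k1 invf_div (mulrC X).
have k3 : expR ((c + 1) * w p) = X * p / q.
  by rewrite mulrDl mul1r expRD ew eX /q mulrA.
have k4 : expR (- ((c + 1) * w p)) = q / (p * X).
  by rewrite expRN k3 invf_div (mulrC X).
have F := @keyF R c (w p) c1.
rewrite k1 k2' k3 k4 in F.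
have pq1 : p + q = 1 by rewrite /q; ring.
have H := @final_alg R c p q X c1 p0 q0 pq1 X0 F.
have M0 : 0 < 2 * p ^+ 2 * q ^+ 2 * (X + 1) ^+ 2.
  apply: mulr_gt0; last by apply: exprn_gt0; lra.
  apply: mulr_gt0; last exact: exprn_gt0.
  apply: mulr_gt0 => //; exact: exprn_gt0.
have Id : ddg p * (2 * p ^+ 2 * q ^+ 2 * (X + 1) ^+ 2)
  = 2 * c ^+ 2 * X + c * (X ^+ 2 - 1) * (p - q) - (p ^+ 2 + q ^+ 2) * (X + 1) ^+ 2.
  rewrite /ddg /Qd /Q /wd /wdd -/E emE -/q /X /c.
  have q0' : 0 < 1 - p by lra.
  have EE : 0 < E * E + 1 by rewrite addr_gt0 // mulr_gt0.
  rewrite /q.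
  field.
  by rewrite !gt_eqF.
rewrite -Id in H.
by rewrite -(pmulr_lge0 _ M0).
Qed.

Lemma Dg_near (z : R) : 0 < z < 1 -> \forall u \near z, 'D_1 g u = dg u.
Proof.
move=> hz.
have : z \in `]0, 1[ by rewrite in_itv /=.
move/near_in_itvoo; apply: filterS => u.
rewrite in_itv /= => hu.
exact: (@derive_val _ _ _ _ _ _ _ (@der_g u hu)).
Qed.

Lemma g_convex_le (x y t : R) : 2^-1 < k -> 0 < x < 1 -> 0 < y < 1 -> x <= y ->
  0 <= t -> t <= 1 -> g (t * x + (1 - t) * y) <= t * g x + (1 - t) * g y.
Proof.
move=> k2 hx hy xy t0 t1.
have hin : forall z, x < z < y -> 0 < z < 1.
  move=> z /andP[xz zy]; case/andP: hx => x0 x1; case/andP: hy => y0 y1.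
  apply/andP; split; lra.
have := @second_derivative_convex R (g : R -> R^o) x y _ _ _ _ _ (Itv01 t0 t1) xy.
rewrite !convRE /=; apply.
- move=> z hz; have hz' := hin z hz.
  rewrite (near_eq_derive _ (@Dg_near z hz')).
  rewrite (@derive_val _ _ _ _ _ _ _ (@der_dg z hz')).
  exact: ddg_ge0.
- have [dgy _] := @der_g y hy.
  exact/cvg_at_left_filter/differentiable_continuous/derivable1_diffP.
- have [dgx _] := @der_g x hx.
  exact/cvg_at_right_filter/differentiable_continuous/derivable1_diffP.
- move=> z; rewrite in_itv /= => hz; have [] := @der_g z (hin z hz); done.
- move=> z; rewrite in_itv /= => hz; have hz' := hin z hz.
  apply: (@near_eq_derivable _ _ _ (dg : R -> R^o)).
    by apply: filterS (@Dg_near z hz') => u ->.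
  by have [] := @der_dg z hz'.
Qed.

End S.

Lemma S_eq {R : realType} (alpha p : R) : 0 < p < 1 ->
  ln (p `^ alpha * (1 - p) `^ (1 - alpha) + (1 - p) `^ alpha * p `^ (1 - alpha))
  = g (alpha - 2^-1) p.
Proof.
case/andP=> p0 p1.
have q0 : 0 < 1 - p by lra.
rewrite /powR !gt_eqF // -!expRD /g /ep /em /w.
set A := 2^-1 * ln p + 2^-1 * ln (1 - p).
have -> : alpha * ln p + (1 - alpha) * ln (1 - p)
  = A + (alpha - 2^-1) * (ln p - ln (1 - p)) by rewrite /A; field.
have -> : alpha * ln (1 - p) + (1 - alpha) * ln p
  = A + - ((alpha - 2^-1) * (ln p - ln (1 - p))) by rewrite /A; field.
rewrite !expRD -mulrDr -[expR (2^-1 * _) * _]expRD lnM ?expRK //.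
all: rewrite ?posrE ?expR_gt0 //.
by apply: addr_gt0; exact: expR_gt0.
Qed.

Theorem lemma1 (R : realType) (alpha : R) (halpha : 1 < alpha)
  (x y t : R) (hx : 0 <= x <= 1) (hy : 0 <= y <= 1) (ht : 0 < t < 1) :
  (r_alpha alpha (t * x + (1 - t) * y)
     <= t%:E * r_alpha alpha x + (1 - t)%:E * r_alpha alpha y)%E.
Proof.
have /andP[t0 t1] := ht.
have rne : forall p, r_alpha alpha p != -oo%E.
  by move=> p; rewrite /r_alpha; case: ifP.
have rI : forall p, 0 < p < 1 ->
    r_alpha alpha p = ((alpha - 1)^-1 * g (alpha - 2^-1) p)%:E.
  by move=> p hp; rewrite /r_alpha hp S_eq.
have tE : (0 < t%:E)%E by rewrite lte_fin.
have t1E : (0 < (1 - t)%:E)%E by rewrite lte_fin; lra.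
have mulne : forall (c : R) p, 0 < c -> (c%:E * r_alpha alpha p)%E != -oo%E.
  move=> c p c0; rewrite /r_alpha; case: ifP => _ //.
  by rewrite gt0_muley // lte_fin.
case: (boolP (0 < x < 1)) => hx'; last first.
  have -> : r_alpha alpha x = +oo%E by rewrite /r_alpha (negbTE hx').
  by rewrite gt0_muley // addye ?mulne ?leey //; lra.
case: (boolP (0 < y < 1)) => hy'; last first.
  have -> : r_alpha alpha y = +oo%E by rewrite /r_alpha (negbTE hy').
  by rewrite gt0_muley // addey ?mulne ?leey //; lra.
have /andP[x0 x1] := hx'; have /andP[y0 y1] := hy'.
have hz : 0 < t * x + (1 - t) * y < 1.
  apply/andP; split; nra.
rewrite (rI _ hz) (rI _ hx') (rI _ hy') -!EFinM -EFinD lee_fin.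
have a1 : 0 < (alpha - 1)^-1 by rewrite invr_gt0; lra.
have k2 : 2^-1 < alpha - 2^-1 by lra.
have H : g (alpha - 2^-1) (t * x + (1 - t) * y)
    <= t * g (alpha - 2^-1) x + (1 - t) * g (alpha - 2^-1) y.
  have [xy|yx] := leP x y.
    by apply: g_convex_le => //; lra.
  have u0 : 0 <= 1 - t by lra.
  have u1 : 1 - t <= 1 by lra.
  have := @g_convex_le R (alpha - 2^-1) y x (1 - t) k2 hy' hx' (ltW yx) u0 u1.
  have -> : 1 - (1 - t) = t by ring.
  by rewrite [t * x + _]addrC [t * g _ x + _]addrC.
have := ler_wpM2l (ltW a1) H.
set a := (alpha - 1)^-1; set gx := g _ x; set gy := g _ y.
have -> : t * (a * gx) + (1 - t) * (a * gy) = a * (t * gx + (1 - t) * gy) by ring.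
by [].
Qed.
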